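(* Let $S=\mathbb{R}/{\sim_F^*}$ and let $f:\mathbb{R}\to S$ be $f(x)=[x]_{\sim_F^*}$. Then for every $T_3$-anonymous predictor $P:{}^{\mathbb{R}}S\to{}^{\mathbb{R}}S$, the function $P(f)$ is constant, i.e. $P(f)(w)=P(f)(z)$ for all $w,z\in\mathbb{R}$.
   Context: Let $h(x)=0$ for $x\le 0$ and $h(x)=e^{-1/x}$ for $x>0$, and $s(x)=\frac{h(x)}{h(x)+h(1-x)}$ on $[0,1]$. For $A=(p_1,q_1)$, $B=(p_2,q_2)$ with $p_1<p_2$, $q_1<q_2$, let $s_{AB}:[p_1,p_2]\to[q_1,q_2]$, $s_{AB}(x)=(q_2-q_1)\,s\!\left(\frac{x-p_1}{p_2-p_1}\right)+q_1$. Let $F$ be the set of all such $s_{AB}$ with $A,B$ having rational coordinates. Write $x\sim_F y$ if some $g\in F$ has $g(x)=y$ or $g^{-1}(x)=y$, and let $\sim_F^*$ be the reflexive-transitive closure of $\sim_F$ (an equivalence relation on $\mathbb{R}$). ${}^{\mathbb{R}}S$ denotes all functions $\mathbb{R}\to S$. A predictor is $P:{}^{\mathbb{R}}S\to{}^{\mathbb{R}}S$ with $P(f)(x)=P(g)(x)$ whenever $f\upharpoonright(-\infty,x)=g\upharpoonright(-\infty,x)$. $P$ is $T_3$-anonymous if $P(f\circ t)=P(f)\circ t$ for every $f$ and every $t\in T_3$, where $T_3$ is the set of infinitely differentiable strictly increasing bijections $\mathbb{R}\to\mathbb{R}$. *)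

(* Defs.v *)
From Stdlib Require Import Reals QArith Relations.
Open Scope R_scope.

Definition h (x : R) : R := if Rle_dec x 0 then 0 else exp (- / x).

Definition s (x : R) : R := h x / (h x + h (1 - x)).

(* s_AB with A = (p1,q1), B = (p2,q2), as a formula on reals;
   its domain [p1,p2] is imposed separately in simF. *)
Definition sAB (p1 q1 p2 q2 : R) (x : R) : R :=
  (q2 - q1) * s ((x - p1) / (p2 - p1)) + q1.

(* g = s_AB in F (rational endpoints, p1<p2, q1<q2), g : [p1,p2] -> [q1,q2]. *)
Definition inF_graph (x y : R) : Prop :=
  exists p1 q1 p2 q2 : Q,
    Q2R p1 < Q2R p2 /\ Q2R q1 < Q2R q2 /\
    Q2R p1 <= x <= Q2R p2 /\ sAB (Q2R p1) (Q2R q1) (Q2R p2) (Q2R q2) x = y.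

(* x ~F y iff g(x) = y or g^{-1}(x) = y for some g in F *)
Definition simF (x y : R) : Prop := inF_graph x y \/ inF_graph y x.

Definition simF_star : R -> R -> Prop := clos_refl_trans R simF.

Definition S : Type := { A : R -> Prop | exists x, A = simF_star x }.

Definition fcls (x : R) : S := exist _ (simF_star x) (ex_intro _ x eq_refl).

Definition smooth (t : R -> R) : Prop :=
  exists d : nat -> R -> R, d O = t /\
    forall n x, derivable_pt_lim (d n) x (d (Datatypes.S n) x).

Definition T3 (t : R -> R) : Prop :=
  smooth t /\ (forall x y, x < y -> t x < t y) /\
  (forall x y, t x = t y -> x = y) /\ (forall y, exists x, t x = y).

Definition is_predictor {X : Type} (P : (R -> X) -> (R -> X)) : Prop :=
  forall f g x, (forall y, y < x -> f y = g y) -> P f x = P g x.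

Definition T3_anonymous {X : Type} (P : (R -> X) -> (R -> X)) : Prop :=
  forall f t, T3 t -> P (fun x => f (t x)) = (fun x => P f (t x)).

(* Main.v *)
Require Import Defs.
From Stdlib Require Import Reals QArith Qreals Lra Lia List ZArith Relations.
From Stdlib Require Import FunctionalExtensionality ClassicalEpsilon PropExtensionality ProofIrrelevance.
Open Scope R_scope.


Lemma glue (g phi psi : R -> R) (p y q l : R) :
  p < y -> y < q ->
  (forall x, p <= x <= y -> g x = phi x) ->
  (forall x, y <= x <= q -> g x = psi x) ->
  derivable_pt_lim phi y l -> derivable_pt_lim psi y l ->
  derivable_pt_lim g y l.
Proof.
  intros Hp Hq H1 H2 D1 D2 eps Heps.
  destruct (D1 eps Heps) as [d1 Hd1].
  destruct (D2 eps Heps) as [d2 Hd2].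
  assert (Hpos : 0 < Rmin (Rmin d1 d2) (Rmin (y - p) (q - y))).
  { destruct d1 as [d1 ?]; destruct d2 as [d2 ?]; simpl.
    repeat apply Rmin_glb_lt; lra. }
  exists (mkposreal _ Hpos). intros h Hh Hha. simpl in Hha.
  assert (A1 := Rmin_l (Rmin d1 d2) (Rmin (y - p) (q - y))).
  assert (A2 := Rmin_r (Rmin d1 d2) (Rmin (y - p) (q - y))).
  assert (B1 := Rmin_l d1 d2). assert (B2 := Rmin_r d1 d2).
  assert (C1 := Rmin_l (y-p) (q-y)). assert (C2 := Rmin_r (y-p) (q-y)).
  destruct (Rlt_dec h 0) as [Hn|Hn].
  - rewrite (H1 (y+h)) by (rewrite Rabs_left in Hha; lra).
    rewrite (H1 y) by lra. apply Hd1; auto. lra.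
  - rewrite (H2 (y+h)) by (rewrite Rabs_right in Hha; lra).
    rewrite (H2 y) by lra. apply Hd2; auto. lra.
Qed.

Lemma loc (g phi : R -> R) (p y q l : R) :
  p < y -> y < q ->
  (forall x, p <= x <= q -> g x = phi x) ->
  derivable_pt_lim phi y l -> derivable_pt_lim g y l.
Proof.
  intros. apply (glue g phi phi p y q l); auto; intros; apply H1; lra.
Qed.

Lemma left_const (g : R -> R) (y d l : R) : 0 < d ->
  (forall x, y - d < x <= y -> g x = g y) -> derivable_pt_lim g y l -> l = 0.
Proof.
  intros Hd Hc D. destruct (Req_dec l 0) as [|Hl]; auto.
  assert (He : 0 < Rabs l / 2) by (apply Rabs_pos_lt in Hl; lra).
  destruct (D _ He) as [e He2].
  destruct e as [e ep]; simpl in He2.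
  set (h := - Rmin e d / 2).
  assert (0 < Rmin e d) by (apply Rmin_glb_lt; lra).
  assert (Rmin e d <= e) by apply Rmin_l. assert (Rmin e d <= d) by apply Rmin_r.
  assert (Hh : h <> 0) by (unfold h; lra).
  assert (Ha : Rabs h < e) by (unfold h; rewrite Rabs_left; lra).
  specialize (He2 h Hh Ha). rewrite Hc in He2 by (unfold h; lra).
  replace ((g y - g y) / h - l) with (- l) in He2 by (field; auto).
  rewrite Rabs_Ropp in He2. apply Rabs_pos_lt in Hl. lra.
Qed.

Lemma right_const (g : R -> R) (y d l : R) : 0 < d ->
  (forall x, y <= x < y + d -> g x = g y) -> derivable_pt_lim g y l -> l = 0.
Proof.
  intros Hd Hc D. destruct (Req_dec l 0) as [|Hl]; auto.
  assert (He : 0 < Rabs l / 2) by (apply Rabs_pos_lt in Hl; lra).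
  destruct (D _ He) as [e He2].
  destruct e as [e ep]; simpl in He2.
  set (h := Rmin e d / 2).
  assert (0 < Rmin e d) by (apply Rmin_glb_lt; lra).
  assert (Rmin e d <= e) by apply Rmin_l. assert (Rmin e d <= d) by apply Rmin_r.
  assert (Hh : h <> 0) by (unfold h; lra).
  assert (Ha : Rabs h < e) by (unfold h; rewrite Rabs_right; lra).
  specialize (He2 h Hh Ha). rewrite Hc in He2 by (unfold h; lra).
  replace ((g y - g y) / h - l) with (- l) in He2 by (field; auto).
  rewrite Rabs_Ropp in He2. apply Rabs_pos_lt in Hl. lra.
Qed.

Fixpoint Dn (n : nat) (f : R -> R) : Prop :=
  match n with
  | O => True
  | Datatypes.S m => exists f', (forall x, derivable_pt_lim f x (f' x)) /\ Dn m f'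
  end.

Lemma Dn_down n : forall f, Dn (Datatypes.S n) f -> Dn n f.
Proof.
  induction n; intros f H; simpl; auto.
  destruct H as [f' [H1 H2]]. exists f'. split; auto.
Qed.

Lemma Dn_plus n : forall f g, Dn n f -> Dn n g -> Dn n (fun x => f x + g x).
Proof.
  induction n; intros f g Hf Hg; simpl; auto.
  destruct Hf as [f' [Hf1 Hf2]]; destruct Hg as [g' [Hg1 Hg2]].
  exists (fun x => f' x + g' x). split; auto.
  intro x. apply (derivable_pt_lim_plus f g); auto.
Qed.

Lemma Dn_const n c : Dn n (fun _ => c).
Proof.
  revert c; induction n; intros c; simpl; auto.
  exists (fun _ => 0). split; auto. intro; apply derivable_pt_lim_const.
Qed.

Lemma Dn_mult n : forall f g, Dn n f -> Dn n g -> Dn n (fun x => f x * g x).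
Proof.
  induction n; intros f g Hf Hg; simpl; auto.
  pose proof (Dn_down _ _ Hf) as Hf0. pose proof (Dn_down _ _ Hg) as Hg0.
  destruct Hf as [f' [Hf1 Hf2]]; destruct Hg as [g' [Hg1 Hg2]].
  exists (fun x => f' x * g x + f x * g' x). split.
  - intro x. apply (derivable_pt_lim_mult f g); auto.
  - apply Dn_plus; apply IHn; auto.
Qed.

Lemma Dn_inv n : forall g, (forall x, g x <> 0) -> Dn n g -> Dn n (fun x => / g x).
Proof.
  induction n; intros g Hne Hg; simpl; auto.
  pose proof (Dn_down _ _ Hg) as Hg0.
  destruct Hg as [g' [Hg1 Hg2]].
  exists (fun x => (-1) * g' x * (/ g x * / g x)). split.
  - intro x.
    assert (H := derivable_pt_lim_div (fun _ => 1) g x 0 (g' x)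
                   (derivable_pt_lim_const 1 x) (Hg1 x) (Hne x)).
    replace (fun x => / g x) with (fun x => 1 / g x).
    2:{ apply functional_extensionality; intro; unfold Rdiv; ring. }
    replace ((-1) * g' x * (/ g x * / g x)) with ((0 * g x - g' x * 1) / (g x)²).
    + exact H.
    + unfold Rsqr. field. apply Hne.
  - apply Dn_mult. apply Dn_mult; auto. apply Dn_const.
    apply Dn_mult; apply IHn; auto.
Qed.

Lemma Dn_refl n : forall f, Dn n f -> Dn n (fun x => f (1 - x)).
Proof.
  induction n; intros f Hf; simpl; auto.
  destruct Hf as [f' [Hf1 Hf2]].
  exists (fun x => (-1) * f' (1 - x)). split.
  - intro x.
    assert (H : derivable_pt_lim (fun x => 1 - x) x (-1)).
    { replace (-1) with (0 - 1) by ring.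
      apply (derivable_pt_lim_minus (fun _ => 1) id). apply derivable_pt_lim_const.
      apply derivable_pt_lim_id. }
    pose proof (derivable_pt_lim_comp (fun x => 1 - x) f x (-1) (f' (1 - x)) H (Hf1 _)).
    unfold comp in H0. replace ((-1) * f' (1 - x)) with (f' (1 - x) * -1) by ring. exact H0.
  - apply Dn_mult. apply Dn_const. apply IHn; auto.
Qed.

Lemma seq_Dn (d : nat -> R -> R) :
  (forall k x, derivable_pt_lim (d k) x (d (Datatypes.S k) x)) -> forall n k, Dn n (d k).
Proof.
  intros H n; induction n; intros k; simpl; auto.
  exists (d (Datatypes.S k)); split; auto.
Qed.

Definition der (f : R -> R) : R -> R :=
  epsilon (inhabits (fun _ => 0)) (fun f' => forall x, derivable_pt_lim f x (f' x)).

Lemma Dn_extract (f : R -> R) : (forall n, Dn n f) ->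
  exists d : nat -> R -> R, d O = f /\ forall n x, derivable_pt_lim (d n) x (d (Datatypes.S n) x).
Proof.
  intros Hf.
  assert (Key : forall g, (forall n, Dn n g) ->
            (forall x, derivable_pt_lim g x (der g x)) /\ (forall n, Dn n (der g))).
  { intros g Hg.
    assert (E : exists f', forall x, derivable_pt_lim g x (f' x)).
    { destruct (Hg 1%nat) as [f' [H1 _]]. eauto. }
    pose proof (epsilon_spec (inhabits (fun _ => 0)) _ E) as Hs. fold (der g) in Hs.
    split; auto. intro n. destruct (Hg (Datatypes.S n)) as [f' [H1 H2]].
    replace (der g) with f'; auto.
    apply functional_extensionality; intro x. eapply uniqueness_limite; eauto. }
  exists (fun n => Nat.iter n der f). split; auto.
  assert (A : forall n, forall m, Dn m (Nat.iter n der f)).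
  { induction n; simpl; auto. apply Key; auto. }
  intros n x. simpl. apply Key. apply A.
Qed.


Fixpoint peval (p : list R) (t : R) : R :=
  match p with nil => 0 | a :: q => a + t * peval q t end.
Fixpoint padd (p q : list R) : list R :=
  match p, q with
  | nil, _ => q | _, nil => p | a :: p', b :: q' => (a + b) :: padd p' q' end.
Fixpoint pder (p : list R) : list R :=
  match p with nil => nil | a :: q => padd q (0 :: pder q) end.
Definition pnext (p : list R) : list R := 0 :: 0 :: padd p (map Ropp (pder p)).
Fixpoint ppow (k : nat) : list R := match k with O => 1 :: nil | Datatypes.S k' => pnext (ppow k') end.
Fixpoint pabs (p : list R) : R := match p with nil => 0 | a :: q => Rabs a + pabs q end.

Lemma peval_add p : forall q t, peval (padd p q) t = peval p t + peval q t.
Proof. induction p; intros [|b q] t; simpl; try ring. rewrite IHp. ring. Qed.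
Lemma peval_opp p t : peval (map Ropp p) t = - peval p t.
Proof. induction p; simpl; try ring. rewrite IHp. ring. Qed.
Lemma peval_next p t : peval (pnext p) t = t * t * (peval p t - peval (pder p) t).
Proof. unfold pnext; simpl. rewrite peval_add, peval_opp. ring. Qed.

Lemma peval_der p t : derivable_pt_lim (peval p) t (peval (pder p) t).
Proof.
  induction p; simpl.
  - apply derivable_pt_lim_const.
  - rewrite peval_add. simpl.
    replace (peval p t + (0 + t * peval (pder p) t)) with (0 + (1 * peval p t + t * peval (pder p) t)) by ring.
    apply (derivable_pt_lim_plus (fun _ => a) (fun t => t * peval p t)).
    apply derivable_pt_lim_const.
    apply (derivable_pt_lim_mult id (peval p)). apply derivable_pt_lim_id. auto.
Qed.

Lemma pabs_pos p : 0 <= pabs p.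
Proof. induction p; simpl; auto with real. pose proof (Rabs_pos a); lra. Qed.

Lemma peval_bound p t : 1 <= t -> Rabs (peval p t) <= pabs p * t ^ length p.
Proof.
  intro Ht. induction p; simpl.
  - rewrite Rabs_R0; lra.
  - eapply Rle_trans. apply Rabs_triang. rewrite Rabs_mult, (Rabs_right t) by lra.
    assert (1 <= t ^ length p) by (apply pow_R1_Rle; lra).
    pose proof (Rabs_pos a). pose proof (pabs_pos p).
    assert (t * Rabs (peval p t) <= t * (pabs p * t ^ length p)) by (apply Rmult_le_compat_l; lra).
    assert (1 <= t * t ^ length p) by nra. nra.
Qed.

Definition hd (k : nat) (x : R) : R :=
  if Rle_dec x 0 then 0 else peval (ppow k) (/ x) * exp (- / x).

Lemma hd0 : hd 0 = h.
Proof.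
  apply functional_extensionality; intro x. unfold hd, h. simpl.
  destruct (Rle_dec x 0); auto. ring.
Qed.

Lemma exp_pow_ge n T : 0 < T -> T ^ (Datatypes.S n) <= INR (Datatypes.S n) ^ (Datatypes.S n) * exp T.
Proof.
  intro HT. set (m := INR (Datatypes.S n)). assert (Hm : 0 < m) by (unfold m; apply lt_0_INR; lia).
  assert (E : forall k, exp (INR k * (T / m)) = exp (T / m) ^ k).
  { induction k. simpl. rewrite Rmult_0_l, exp_0. auto.
    rewrite S_INR, Rmult_plus_distr_r, exp_plus, IHk, Rmult_1_l. simpl. ring. }
  replace T with (INR (Datatypes.S n) * (T / m)) at 2 by (unfold m in *; field; lra).
  rewrite E. replace (T ^ Datatypes.S n) with (m ^ Datatypes.S n * (T / m) ^ Datatypes.S n).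
  2:{ rewrite <- Rpow_mult_distr. f_equal. field. lra. }
  fold m. apply Rmult_le_compat_l. apply pow_le; lra.
  apply pow_incr. split. apply Rlt_le, Rdiv_lt_0_compat; lra.
  pose proof (exp_ineq1_le (T/m)). lra.
Qed.

Lemma hd_flat k : derivable_pt_lim (hd k) 0 0.
Proof.
  set (p := ppow k). set (N := length p).
  set (K := pabs p * INR (Datatypes.S (Datatypes.S N)) ^ (Datatypes.S (Datatypes.S N))).
  assert (HK : 0 <= K) by (unfold K; apply Rmult_le_pos; [apply pabs_pos| apply pow_le, pos_INR]).
  intros eps Heps.
  assert (Hd : 0 < Rmin 1 (eps / (K + 1))) by (apply Rmin_glb_lt; [lra| apply Rdiv_lt_0_compat; lra]).
  exists (mkposreal _ Hd). intros x Hx Hxa. simpl in Hxa.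
  assert (M1 := Rmin_l 1 (eps / (K+1))). assert (M2 := Rmin_r 1 (eps / (K+1))).
  rewrite Rplus_0_l. unfold hd at 2. destruct (Rle_dec 0 0) as [_|]; [|lra].
  unfold hd. destruct (Rle_dec x 0).
  - replace ((0 - 0) / x - 0) with 0 by (field; auto). rewrite Rabs_R0; lra.
  - assert (Hx0 : 0 < x) by lra. rewrite Rabs_right in Hxa by lra.
    set (T := / x). assert (HT : 1 <= T).
    { unfold T. rewrite <- Rinv_1. apply Rinv_le_contravar; lra. }
    replace ((peval (ppow k) T * exp (- T) - 0) / x - 0) with (peval p T * (T * exp (- T)))
      by (unfold T, p; field; lra).
    assert (HB := peval_bound p T HT). fold N in HB.
    assert (HE := exp_pow_ge (Datatypes.S N) T ltac:(lra)).
    assert (Hexp : 0 < exp T) by apply exp_pos.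
    assert (HTN : 0 < T ^ N) by (apply pow_lt; lra).
    rewrite exp_Ropp.
    assert (Q : T ^ N * (T * / exp T) <= INR (Datatypes.S (Datatypes.S N)) ^ Datatypes.S (Datatypes.S N) * x).
    { replace x with (/ T) by (unfold T; field; lra).
      replace (T ^ N * (T * / exp T)) with (T ^ Datatypes.S (Datatypes.S N) / (T * exp T)) by (simpl; field; lra).
      apply (Rmult_le_reg_r (T * exp T)). nra.
      replace (T ^ Datatypes.S (Datatypes.S N) / (T * exp T) * (T * exp T)) with (T ^ Datatypes.S (Datatypes.S N)) by (field; lra).
      replace (INR (Datatypes.S (Datatypes.S N)) ^ Datatypes.S (Datatypes.S N) * / T * (T * exp T)) with (INR (Datatypes.S (Datatypes.S N)) ^ Datatypes.S (Datatypes.S N) * exp T) by (field; lra).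
      auto. }
    rewrite Rabs_mult, (Rabs_right (T * / exp T)).
    2:{ apply Rle_ge. apply Rmult_le_pos. lra. apply Rlt_le, Rinv_0_lt_compat; lra. }
    assert (Hpos : 0 <= T * / exp T) by (apply Rmult_le_pos; [lra| apply Rlt_le, Rinv_0_lt_compat; lra]).
    eapply Rle_lt_trans. apply Rmult_le_compat_r. exact Hpos. exact HB.
    rewrite Rmult_assoc.
    eapply Rle_lt_trans. apply Rmult_le_compat_l. apply pabs_pos. exact Q.
    rewrite <- Rmult_assoc. fold K.
    apply Rle_lt_trans with ((K + 1) * x). nra.
    apply Rlt_le_trans with ((K+1) * (eps / (K+1))). apply Rmult_lt_compat_l; lra.
    right; field; lra.
Qed.

Lemma inv_der x : x <> 0 -> derivable_pt_lim (fun y => / y) x (- / (x * x)).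
Proof.
  intro Hx.
  assert (H := derivable_pt_lim_div (fun _ => 1) id x 0 1
                 (derivable_pt_lim_const 1 x) (derivable_pt_lim_id x) Hx).
  replace (fun y => / y) with (div_fct (fun _ : R => 1) id).
  2:{ apply functional_extensionality; intro; unfold div_fct, id, Rdiv; ring. }
  replace (- / (x * x)) with ((0 * id x - 1 * 1) / (id x)²); auto.
  unfold id, Rsqr. field. auto.
Qed.

Definition Fk (k : nat) (y : R) : R := peval (ppow k) (/ y) * exp (- / y).

Lemma Fk_der k x : x <> 0 -> derivable_pt_lim (Fk k) x (Fk (Datatypes.S k) x).
Proof.
  intro Hx. unfold Fk.
  assert (D1 : derivable_pt_lim (fun y => peval (ppow k) (/ y)) x
                 (peval (pder (ppow k)) (/ x) * (- / (x * x)))).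
  { apply (derivable_pt_lim_comp (fun y => / y) (peval (ppow k))).
    apply inv_der; auto. apply peval_der. }
  assert (D2 : derivable_pt_lim (fun y => exp (- / y)) x (exp (- / x) * (/ (x * x)))).
  { apply (derivable_pt_lim_comp (fun y => - / y) exp).
    replace (/ (x * x)) with (- (- / (x * x))) by ring.
    apply (derivable_pt_lim_opp (fun y => / y)). apply inv_der; auto.
    apply derivable_pt_lim_exp. }
  pose proof (derivable_pt_lim_mult _ _ _ _ _ D1 D2) as D. unfold mult_fct in D.
  simpl ppow. rewrite peval_next.
  match goal with |- derivable_pt_lim ?f _ ?l => replace l with
    (peval (pder (ppow k)) (/ x) * - / (x * x) * exp (- / x) +
       peval (ppow k) (/ x) * (exp (- / x) * / (x * x))) end.
  exact D. field. auto.
Qed.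

Lemma hd_der k x : derivable_pt_lim (hd k) x (hd (Datatypes.S k) x).
Proof.
  destruct (Rtotal_order x 0) as [Hn|[Hz|Hp]].
  - apply (loc _ (fun _ => 0) (x - 1) x (x / 2)); try lra.
    intros y Hy. unfold hd. destruct (Rle_dec y 0); auto; lra.
    unfold hd. destruct (Rle_dec x 0); [|lra]. apply derivable_pt_lim_const.
  - subst. unfold hd at 2. destruct (Rle_dec 0 0); [|lra]. apply hd_flat.
  - apply (loc _ (Fk k) (x / 2) x (x + 1)); try lra.
    intros y Hy. unfold hd, Fk. destruct (Rle_dec y 0); auto; lra.
    replace (hd (Datatypes.S k) x) with (Fk (Datatypes.S k) x).
    apply Fk_der; lra. unfold hd, Fk. destruct (Rle_dec x 0); auto; lra.
Qed.

Lemma h_Dn n : Dn n h.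
Proof. rewrite <- hd0. apply (seq_Dn hd hd_der). Qed.

Lemma h_nonneg x : 0 <= h x.
Proof. unfold h. destruct (Rle_dec x 0). lra. apply Rlt_le, exp_pos. Qed.
Lemma h_pos x : 0 < x -> 0 < h x.
Proof. intro. unfold h. destruct (Rle_dec x 0). lra. apply exp_pos. Qed.
Lemma h_zero x : x <= 0 -> h x = 0.
Proof. intro. unfold h. destruct (Rle_dec x 0); auto; lra. Qed.
Lemma h_lt x y : 0 < x -> x < y -> h x < h y.
Proof.
  intros. unfold h. destruct (Rle_dec x 0); [lra|]. destruct (Rle_dec y 0); [lra|].
  apply exp_increasing. apply Ropp_lt_contravar. apply Rinv_lt_contravar; nra.
Qed.

Lemma denom_pos x : 0 < h x + h (1 - x).
Proof.
  destruct (Rlt_dec 0 x). pose proof (h_pos x r). pose proof (h_nonneg (1-x)); lra.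
  pose proof (h_pos (1 - x) ltac:(lra)). pose proof (h_nonneg x); lra.
Qed.

Lemma s_Dn n : Dn n s.
Proof.
  replace s with (fun x => h x * / (h x + h (1 - x))).
  2:{ apply functional_extensionality; intro; unfold s, Rdiv; auto. }
  apply Dn_mult. apply h_Dn. apply Dn_inv.
  intro x; pose proof (denom_pos x); lra.
  apply Dn_plus. apply h_Dn. apply (Dn_refl n h). apply h_Dn.
Qed.

Lemma s_smooth_ex : exists d : nat -> R -> R, d O = s /\
   forall n x, derivable_pt_lim (d n) x (d (Datatypes.S n) x).
Proof. apply Dn_extract. apply s_Dn. Qed.

Definition sd : nat -> R -> R := proj1_sig (constructive_indefinite_description _ s_smooth_ex).
Lemma sd0 : sd O = s.
Proof. unfold sd. destruct (constructive_indefinite_description _ _) as [d [H1 H2]]. auto. Qed.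
Lemma sd_der n x : derivable_pt_lim (sd n) x (sd (Datatypes.S n) x).
Proof. unfold sd. destruct (constructive_indefinite_description _ _) as [d [H1 H2]]. auto. Qed.


Lemma s_zero x : x <= 0 -> s x = 0.
Proof. intro. unfold s. rewrite (h_zero x) by auto. unfold Rdiv; ring. Qed.
Lemma s_one x : 1 <= x -> s x = 1.
Proof.
  intro. unfold s. rewrite (h_zero (1 - x)) by lra. pose proof (h_pos x ltac:(lra)).
  field. lra.
Qed.
Lemma s_range x : 0 <= s x <= 1.
Proof.
  unfold s. pose proof (denom_pos x). pose proof (h_nonneg x). pose proof (h_nonneg (1-x)).
  split. apply Rmult_le_pos; [lra| apply Rlt_le, Rinv_0_lt_compat; lra].
  apply (Rmult_le_reg_r (h x + h (1 - x))); auto. unfold Rdiv.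
  rewrite Rmult_assoc, Rinv_l by lra. lra.
Qed.
Lemma s_strict x y : 0 <= x -> x < y -> y <= 1 -> s x < s y.
Proof.
  intros H1 H2 H3. unfold s.
  pose proof (denom_pos x). pose proof (denom_pos y).
  assert (A1 : h x <= h y).
  { destruct (Rle_dec x 0). rewrite h_zero by auto. apply h_nonneg.
    apply Rlt_le, h_lt; lra. }
  assert (A2 : 0 < h y) by (apply h_pos; lra).
  assert (A3 : h (1 - y) < h (1 - x)).
  { destruct (Rle_dec (1 - y) 0). rewrite (h_zero (1-y)) by auto. apply h_pos; lra.
    apply h_lt; lra. }
  assert (A4 : 0 <= h (1 - y)) by apply h_nonneg.
  assert (A5 : 0 <= h x) by apply h_nonneg.
  apply (Rmult_lt_reg_r ((h x + h (1 - x)) * (h y + h (1 - y)))). nra.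
  replace (h x / (h x + h (1 - x)) * ((h x + h (1 - x)) * (h y + h (1 - y))))
    with (h x * (h y + h (1 - y))) by (field; lra).
  replace (h y / (h y + h (1 - y)) * ((h x + h (1 - x)) * (h y + h (1 - y))))
    with (h y * (h x + h (1 - x))) by (field; lra).
  nra.
Qed.

Lemma sd_left k : forall x, x <= 0 -> sd k x = 0.
Proof.
  induction k; intros x Hx.
  - rewrite sd0. apply s_zero; auto.
  - apply (left_const (sd k) x 1). lra.
    intros y Hy. rewrite !IHk; lra. apply sd_der.
Qed.

Lemma sd_right : forall k x, 1 <= x -> sd (Datatypes.S k) x = 0.
Proof.
  assert (G : forall k x, 1 <= x -> sd k x = match k with O => 1 | _ => 0 end).
  { intros k; induction k; intros x Hx.
    - rewrite sd0. apply s_one; auto.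
    - apply (right_const (sd k) x 1). lra.
      intros y Hy. rewrite !IHk; lra. apply sd_der. }
  intros; apply G; auto.
Qed.

Lemma sd_cont k x : continuity_pt (sd k) x.
Proof. apply derivable_continuous_pt. exists (sd (Datatypes.S k) x). apply sd_der. Qed.

Lemma sd_bound k : exists M, 0 <= M /\ forall u, 0 <= u <= 1 -> Rabs (sd k u) <= M.
Proof.
  destruct (continuity_ab_maj (sd k) 0 1 ltac:(lra) (fun c _ => sd_cont k c)) as [m1 [H1 _]].
  destruct (continuity_ab_maj (fun u => - sd k u) 0 1 ltac:(lra)) as [m2 [H2 _]].
  { intros c _. apply (continuity_pt_opp (sd k)). apply sd_cont. }
  exists (Rabs (sd k m1) + Rabs (sd k m2)). split.
  pose proof (Rabs_pos (sd k m1)); pose proof (Rabs_pos (sd k m2)); lra.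
  intros u Hu. specialize (H1 u Hu). specialize (H2 u Hu). simpl in H2.
  pose proof (Rle_abs (sd k m1)). pose proof (Rabs_pos (sd k m2)).
  pose proof (Rabs_pos (sd k m1)). pose proof (Rle_abs (- sd k m2)). rewrite Rabs_Ropp in *.
  unfold Rabs at 1. destruct (Rcase_abs (sd k u)); lra.
Qed.


Definition A (i : Z) : R := if Z.leb 0 i then - / (IZR i + 1) else IZR i - 1.

Lemma A_nonneg i : (0 <= i)%Z -> A i = - / (IZR i + 1).
Proof. intro. unfold A. destruct (Z.leb_spec 0 i); auto; lia. Qed.
Lemma A_le0 i : (i <= 0)%Z -> A i = IZR i - 1.
Proof.
  intro. unfold A. destruct (Z.leb_spec 0 i); auto.
  assert (i = 0%Z) by lia. subst. simpl. field.
Qed.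

Lemma A_succ i : A i < A (i + 1).
Proof.
  destruct (Z.le_gt_cases 0 i).
  - rewrite !A_nonneg by lia. rewrite plus_IZR. apply IZR_le in H. simpl in H.
    apply Ropp_lt_contravar. apply Rinv_lt_contravar; nra.
  - rewrite !A_le0 by lia. rewrite plus_IZR. simpl. lra.
Qed.

Lemma A_neg i : A i < 0.
Proof.
  destruct (Z.le_gt_cases 0 i).
  - rewrite A_nonneg by lia. apply IZR_le in H. simpl in H.
    assert (0 < / (IZR i + 1)) by (apply Rinv_0_lt_compat; lra). lra.
  - rewrite A_le0 by lia. apply IZR_lt in H. simpl in H. lra.
Qed.

Lemma A_mono_nat i : forall n : nat, A i <= A (i + Z.of_nat n).
Proof.
  induction n. simpl. rewrite Z.add_0_r. lra.
  rewrite Nat2Z.inj_succ. replace (i + Z.succ (Z.of_nat n))%Z with (i + Z.of_nat n + 1)%Z by lia.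
  pose proof (A_succ (i + Z.of_nat n)). lra.
Qed.

Lemma A_mono i j : (i <= j)%Z -> A i <= A j.
Proof.
  intro H. replace j with (i + Z.of_nat (Z.to_nat (j - i)))%Z by lia. apply A_mono_nat.
Qed.

Lemma A_lt i j : (i < j)%Z -> A i < A j.
Proof.
  intro H. pose proof (A_succ i). pose proof (A_mono (i+1) j ltac:(lia)). lra.
Qed.

Definition idx (y : R) : Z := if Rlt_dec y (-1) then up y else (up (- / y) - 2)%Z.

Lemma idx_spec y : y < 0 -> A (idx y) <= y < A (idx y + 1).
Proof.
  intro Hy. unfold idx. destruct (Rlt_dec y (-1)).
  - destruct (archimed y) as [H1 H2].
    assert (Hu : (up y <= -1)%Z).
    { apply Z.lt_succ_r. apply lt_IZR. rewrite succ_IZR. simpl. lra. }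
    rewrite !A_le0 by lia. rewrite plus_IZR. simpl. lra.
  - set (t := - / y). assert (Ht : 1 <= t).
    { unfold t. assert (0 < -y) by lra.
      replace (- / y) with (/ - y) by (field; lra).
      rewrite <- Rinv_1. apply Rinv_le_contravar; lra. }
    destruct (archimed t) as [H1 H2].
    assert (Hu : (2 <= up t)%Z).
    { apply Z.lt_succ_r. apply lt_IZR. rewrite succ_IZR. simpl. lra. }
    rewrite !A_nonneg by lia. rewrite plus_IZR, minus_IZR. simpl.
    assert (Ey : y = - / t) by (unfold t; field; lra).
    rewrite Ey. split.
    + apply Ropp_le_contravar. apply Rinv_le_contravar; lra.
    + apply Ropp_lt_contravar. apply Rinv_lt_contravar; nra.
Qed.

Lemma idx_unique i y : A i <= y < A (i + 1) -> idx y = i.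
Proof.
  intro H. assert (Hy : y < 0) by (pose proof (A_neg (i+1)); lra).
  destruct (idx_spec y Hy) as [H1 H2].
  destruct (Z.lt_trichotomy (idx y) i) as [Hl|[He|Hg]]; auto.
  - pose proof (A_mono (idx y + 1) i ltac:(lia)). lra.
  - pose proof (A_mono (i + 1) (idx y) ltac:(lia)). lra.
Qed.

Definition eta (n : nat) : R := / (INR n + 2) ^ (2 * n + 2).

Lemma eta_pos n : 0 < eta n.
Proof. unfold eta. apply Rinv_0_lt_compat, pow_lt. pose proof (pos_INR n); lra. Qed.

Lemma eta_dec n : eta (Datatypes.S n) < eta n.
Proof.
  unfold eta. apply Rinv_lt_contravar.
  apply Rmult_lt_0_compat; apply pow_lt; pose proof (pos_INR n); rewrite ?S_INR; lra.
  rewrite S_INR. pose proof (pos_INR n).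
  apply Rlt_le_trans with ((INR n + 1 + 2) ^ (2 * n + 2)).
  replace (2 * n + 2)%nat with (Datatypes.S (2 * n + 1)) by lia. rewrite <- !tech_pow_Rmult.
  assert (HH : (INR n + 2) ^ (2 * n + 1) <= (INR n + 1 + 2) ^ (2 * n + 1)) by (apply pow_incr; lra).
  assert (0 < (INR n + 2) ^ (2 * n + 1)) by (apply pow_lt; lra). nra.
  apply Rle_pow. lra. lia.
Qed.

Lemma Q2R_inject_Z z : Q2R (inject_Z z) = IZR z.
Proof. unfold Q2R, inject_Z. simpl. field. Qed.

Lemma dense x y : x < y -> exists q : Q, x < Q2R q < y.
Proof.
  intro H. destruct (archimed (/ (y - x))) as [N1 N2].
  assert (Hinv : 0 < / (y - x)) by (apply Rinv_0_lt_compat; lra).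
  set (n := up (/ (y - x))) in *.
  assert (Hn : 0 < IZR n) by lra.
  destruct (archimed (x * IZR n)) as [M1 M2]. set (m := up (x * IZR n)) in *.
  exists (inject_Z m / inject_Z n)%Q.
  assert (Hn0 : ~ (inject_Z n == 0)%Q).
  { intro E. apply Qeq_eqR in E. rewrite Q2R_inject_Z in E. unfold Q2R in E; simpl in E. lra. }
  rewrite Q2R_div by auto. rewrite !Q2R_inject_Z.
  assert (1 < (y - x) * IZR n).
  { replace 1 with ((y - x) * / (y - x)) by (field; lra). apply Rmult_lt_compat_l; lra. }
  split.
  - apply (Rmult_lt_reg_r (IZR n)); auto. unfold Rdiv. rewrite Rmult_assoc, Rinv_l by lra. lra.
  - apply (Rmult_lt_reg_r (IZR n)); auto. unfold Rdiv. rewrite Rmult_assoc, Rinv_l by lra. lra.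
Qed.

Lemma cq_ex (b : R) (n : nat) : exists q : Q, b - eta n < Q2R q < b - eta (Datatypes.S n).
Proof. apply dense. pose proof (eta_dec n). lra. Qed.

Definition cq (b : R) (n : nat) : Q := proj1_sig (constructive_indefinite_description _ (cq_ex b n)).
Definition c (b : R) (n : nat) : R := Q2R (cq b n).

Lemma c_spec b n : b - eta n < c b n < b - eta (Datatypes.S n).
Proof. unfold c, cq. destruct (constructive_indefinite_description _ _); auto. Qed.

Lemma c_succ b n : c b n < c b (Datatypes.S n).
Proof.
  pose proof (c_spec b n). pose proof (c_spec b (Datatypes.S n)). pose proof (eta_dec (Datatypes.S n)). lra.
Qed.
Lemma c_lt b n : c b n < b.
Proof. pose proof (c_spec b n). pose proof (eta_pos (Datatypes.S n)). lra. Qed.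
Lemma c_close b n : b - c b n < eta n.
Proof. pose proof (c_spec b n). lra. Qed.

Definition V (b : R) (i : Z) : R := if Z.leb 0 i then c b (Z.to_nat i) else c b 0 + IZR i.

Lemma V_succ b i : V b i < V b (i + 1).
Proof.
  unfold V. destruct (Z.leb_spec 0 i), (Z.leb_spec 0 (i + 1)); try lia.
  - rewrite Z2Nat.inj_add by lia. rewrite Nat.add_comm. simpl. apply c_succ.
  - assert (i = -1)%Z by lia. subst. simpl. lra.
  - rewrite plus_IZR. simpl. lra.
Qed.

Lemma V_lt_b b i : V b i < b.
Proof.
  unfold V. destruct (Z.leb_spec 0 i). apply c_lt.
  apply IZR_lt in H. simpl in H. pose proof (c_lt b 0). lra.
Qed.

Lemma V_mono b i j : (i <= j)%Z -> V b i <= V b j.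
Proof.
  intro H. replace j with (i + Z.of_nat (Z.to_nat (j - i)))%Z by lia.
  generalize (Z.to_nat (j - i)). induction n. simpl. rewrite Z.add_0_r. lra.
  rewrite Nat2Z.inj_succ. replace (i + Z.succ (Z.of_nat n))%Z with (i + Z.of_nat n + 1)%Z by lia.
  pose proof (V_succ b (i + Z.of_nat n)). lra.
Qed.

Lemma A_rat i : exists q, A i = Q2R q.
Proof.
  unfold A. destruct (Z.leb_spec 0 i).
  - exists (- / inject_Z (i + 1))%Q. rewrite Q2R_opp, Q2R_inv, Q2R_inject_Z, plus_IZR; auto.
    intro E. apply Qeq_eqR in E. rewrite Q2R_inject_Z in E. unfold Q2R in E; simpl in E.
    rewrite plus_IZR in E. apply IZR_le in H. simpl in *. lra.
  - exists (inject_Z (i - 1)). rewrite Q2R_inject_Z, minus_IZR. auto.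
Qed.

Lemma V_rat b i : exists q, V b i = Q2R q.
Proof.
  unfold V. destruct (Z.leb_spec 0 i).
  - exists (cq b (Z.to_nat i)). auto.
  - exists (cq b 0 + inject_Z i)%Q. rewrite Q2R_plus, Q2R_inject_Z. auto.
Qed.


Definition k0 (k : nat) (a : R) : R := match k with O => a | _ => 0 end.

Definition PD (b : R) (i : Z) (k : nat) (y : R) : R :=
  k0 k (V b i) + (V b (i+1) - V b i) / (A (i+1) - A i) ^ k *
     sd k ((y - A i) / (A (i+1) - A i)).

Lemma aff_der a d y : derivable_pt_lim (fun y => (y - a) / d) y (/ d).
Proof.
  replace (/ d) with ((1 - 0) * / d + (y - a) * 0) by ring.
  apply (derivable_pt_lim_mult (fun y => y - a) (fun _ => / d)).
  apply (derivable_pt_lim_minus id (fun _ => a)). apply derivable_pt_lim_id.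
  apply derivable_pt_lim_const. apply derivable_pt_lim_const.
Qed.

Lemma PD_der b i k y : derivable_pt_lim (PD b i k) y (PD b i (Datatypes.S k) y).
Proof.
  unfold PD. set (dA := A (i + 1) - A i). set (dV := V b (i + 1) - V b i).
  assert (HdA : dA <> 0) by (unfold dA; pose proof (A_succ i); lra).
  assert (H1 : derivable_pt_lim (fun y => sd k ((y - A i) / dA)) y
               (sd (Datatypes.S k) ((y - A i) / dA) * / dA)).
  { apply (derivable_pt_lim_comp (fun y => (y - A i) / dA) (sd k)). apply aff_der. apply sd_der. }
  assert (H2 := derivable_pt_lim_mult (fun _ => dV / dA ^ k) _ _ _ _
                  (derivable_pt_lim_const (dV / dA ^ k) y) H1).
  assert (H3 := derivable_pt_lim_plus (fun _ => k0 k (V b i)) _ _ _ _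
                  (derivable_pt_lim_const (k0 k (V b i)) y) H2).
  unfold mult_fct, plus_fct in H3. simpl k0.
  match goal with |- derivable_pt_lim _ _ ?l => replace l with
    (0 + (0 * sd k ((y - A i) / dA) + dV / dA ^ k * (sd (Datatypes.S k) ((y - A i) / dA) * / dA))) end.
  exact H3. simpl. field. split; auto. apply pow_nonzero; auto.
Qed.

Lemma PD_glue b i k : PD b (i + 1) k (A (i + 1)) = PD b i k (A (i + 1)).
Proof.
  unfold PD. pose proof (A_succ i). pose proof (A_succ (i+1)).
  replace ((A (i + 1) - A (i + 1)) / (A (i + 1 + 1) - A (i + 1))) with 0 by (field; lra).
  replace ((A (i + 1) - A i) / (A (i + 1) - A i)) with 1 by (field; lra).
  destruct k; simpl k0.
  - rewrite sd0, s_zero, s_one by lra. field; lra.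
  - rewrite sd_left by lra. rewrite sd_right by lra. ring.
Qed.

Definition Ld (b : R) (k : nat) (y : R) : R :=
  if Rlt_dec y 0 then PD b (idx y) k y else k0 k b.

Lemma Ld_piece b i k y : A i <= y <= A (i + 1) -> Ld b k y = PD b i k y.
Proof.
  intro H. pose proof (A_neg (i+1)). unfold Ld. destruct (Rlt_dec y 0); [|lra].
  destruct (Req_dec y (A (i + 1))) as [E|E].
  - rewrite (idx_unique (i + 1) y). subst. apply PD_glue.
    split. lra. rewrite E. apply A_succ.
  - rewrite (idx_unique i y); auto. lra.
Qed.

Lemma Ld_der_neg b k y : y < 0 -> derivable_pt_lim (Ld b k) y (Ld b (Datatypes.S k) y).
Proof.
  intro Hy. destruct (idx_spec y Hy) as [H1 H2]. set (i := idx y) in *.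
  rewrite (Ld_piece b i (Datatypes.S k) y) by lra.
  destruct (Req_dec y (A i)) as [E|E].
  - pose proof (A_succ (i - 1)). replace (i - 1 + 1)%Z with i in H by lia.
    apply (glue _ (PD b (i - 1) k) (PD b i k) (A (i - 1)) y (A (i + 1))); try lra.
    + intros x Hx. apply Ld_piece. replace (i - 1 + 1)%Z with i by lia. lra.
    + intros x Hx. apply Ld_piece. lra.
    + replace (PD b i (Datatypes.S k) y) with (PD b (i - 1) (Datatypes.S k) y).
      apply PD_der. rewrite E. pose proof (PD_glue b (i - 1) (Datatypes.S k)).
      replace (i - 1 + 1)%Z with i in H0 by lia. auto.
    + apply PD_der.
  - apply (loc _ (PD b i k) (A i) y (A (i + 1))); try lra.
    intros x Hx. apply Ld_piece. lra. apply PD_der.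
Qed.

Lemma Ld_der_pos b k y : 0 < y -> derivable_pt_lim (Ld b k) y (Ld b (Datatypes.S k) y).
Proof.
  intro Hy. apply (loc _ (fun _ => k0 k b) (y / 2) y (y + 1)); try lra.
  intros x Hx. unfold Ld. destruct (Rlt_dec x 0); auto; lra.
  unfold Ld. destruct (Rlt_dec y 0); [lra|]. simpl k0. apply derivable_pt_lim_const.
Qed.


Lemma PD_est k : exists M, 0 <= M /\ forall b i y, (Z.of_nat k <= i)%Z ->
   A i <= y <= A (i + 1) -> Rabs (PD b i k y - k0 k b) <= M * (y * y).
Proof.
  destruct (sd_bound k) as [Mk [HMk HB]].
  exists (Rmax 1 Mk). split. pose proof (Rmax_l 1 Mk); lra.
  intros b i y Hi Hy.
  assert (Hmax1 := Rmax_l 1 Mk). assert (Hmax2 := Rmax_r 1 Mk).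
  set (n := Z.to_nat i).
  assert (Hin : IZR i = INR n) by (unfold n; rewrite INR_IZR_INZ, Z2Nat.id by lia; auto).
  set (N := INR n + 2).
  assert (HN : 2 <= N) by (unfold N; pose proof (pos_INR n); lra).
  assert (EA0 : A i = - / (N - 1)).
  { rewrite A_nonneg by lia. rewrite Hin. unfold N. f_equal. f_equal. ring. }
  assert (EA1 : A (i + 1) = - / N).
  { rewrite A_nonneg by lia. rewrite plus_IZR, Hin. unfold N. f_equal. f_equal. simpl. ring. }
  assert (EV0 : V b i = c b n).
  { unfold V. destruct (Z.leb_spec 0 i); [auto|lia]. }
  assert (EV1 : V b (i + 1) = c b (Datatypes.S n)).
  { unfold V. destruct (Z.leb_spec 0 (i + 1)); [|lia]. f_equal. unfold n. rewrite Z2Nat.inj_add by lia. simpl. lia. }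
  set (dA := A (i + 1) - A i). set (dV := V b (i + 1) - V b i).
  assert (EdA : dA = / ((N - 1) * N)) by (unfold dA; rewrite EA0, EA1; field; lra).
  assert (HdA : / (N * N) <= dA).
  { rewrite EdA. apply Rinv_le_contravar. nra. nra. }
  assert (HdApos : 0 < / (N * N)) by (apply Rinv_0_lt_compat; nra).
  assert (HdV : 0 < dV) by (unfold dV; pose proof (V_succ b i); lra).
  assert (HdV2 : dV < eta n).
  { unfold dV. rewrite EV0, EV1. pose proof (c_close b n). pose proof (c_lt b (Datatypes.S n)). lra. }
  assert (Hyy : / (N * N) <= y * y).
  { rewrite EA1 in Hy. assert (0 < / N) by (apply Rinv_0_lt_compat; lra).
    rewrite Rinv_mult. nra. }
  assert (Hu : 0 <= (y - A i) / dA <= 1).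
  { assert (0 < dA) by lra. split.
    apply Rmult_le_pos. lra. apply Rlt_le, Rinv_0_lt_compat; lra.
    apply (Rmult_le_reg_r dA); auto. unfold Rdiv. rewrite Rmult_assoc, Rinv_l by lra. unfold dA; lra. }
  assert (Heta : forall m, (m <= n)%nat -> eta n * (N * N) ^ m <= / (N * N)).
  { intros m Hm. unfold eta. fold N.
    replace ((N * N) ^ m) with (N ^ (2 * m)) by (rewrite pow_mult; f_equal; simpl; ring).
    assert (0 < N ^ (2 * n + 2)) by (apply pow_lt; lra).
    assert (0 < N ^ (2 * m)) by (apply pow_lt; lra).
    apply (Rmult_le_reg_r (N ^ (2 * n + 2) * (N * N))). apply Rmult_lt_0_compat; nra.
    replace (/ N ^ (2 * n + 2) * N ^ (2 * m) * (N ^ (2 * n + 2) * (N * N))) with (N ^ (2 * m + 2)).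
    2:{ rewrite pow_add. simpl. field. apply pow_nonzero; lra. }
    replace (/ (N * N) * (N ^ (2 * n + 2) * (N * N))) with (N ^ (2 * n + 2)) by (field; lra).
    apply Rle_pow. lra. lia. }
  unfold PD. fold dA dV.
  destruct k as [|k].
  - simpl k0. simpl pow. rewrite sd0. pose proof (s_range ((y - A i) / dA)).
    replace (V b i + dV / 1 * s ((y - A i) / dA) - b) with (- (b - V b i - dV * s ((y - A i) / dA))) by (field).
    rewrite Rabs_Ropp. rewrite Rabs_right.
    2:{ pose proof (V_lt_b b (i + 1)). assert (dV * s ((y - A i) / dA) <= dV) by nra. unfold dV in *. lra. }
    assert (b - V b i < eta n) by (rewrite EV0; apply c_close).
    pose proof (Heta 0%nat ltac:(lia)). simpl in H1. rewrite Rmult_1_r in H1.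
    assert (0 <= dV * s ((y - A i) / dA)) by nra. nra.
  - simpl k0. rewrite Rplus_0_l, Rminus_0_r.
    specialize (HB _ Hu).
    assert (Hk : (Datatypes.S k <= n)%nat) by lia.
    specialize (Heta _ Hk).
    assert (HdAk : / dA ^ Datatypes.S k <= (N * N) ^ Datatypes.S k).
    { rewrite <- (Rinv_inv ((N * N) ^ Datatypes.S k)). apply Rinv_le_contravar.
      apply Rinv_0_lt_compat, pow_lt; nra. rewrite <- pow_inv. apply pow_incr. lra. }
    assert (0 < / dA ^ Datatypes.S k) by (apply Rinv_0_lt_compat, pow_lt; lra).
    unfold Rdiv. rewrite !Rabs_mult, (Rabs_right dV), (Rabs_right (/ dA ^ _)) by lra.
    apply Rle_trans with (eta n * (N * N) ^ Datatypes.S k * Mk).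
    + apply Rmult_le_compat. nra. apply Rabs_pos.
      apply Rmult_le_compat; lra. auto.
    + assert (0 <= eta n * (N * N) ^ Datatypes.S k) by (pose proof (eta_pos n); apply Rmult_le_pos; [lra| apply pow_le; nra]).
      apply Rle_trans with (/ (N * N) * Mk). nra. nra.
Qed.

Lemma Ld_der_0 b k : derivable_pt_lim (Ld b k) 0 (Ld b (Datatypes.S k) 0).
Proof.
  destruct (PD_est k) as [M [HM HE]].
  unfold Ld at 2. destruct (Rlt_dec 0 0); [lra|]. simpl k0.
  intros eps Heps.
  assert (Hk : 0 < / (INR k + 2)) by (apply Rinv_0_lt_compat; pose proof (pos_INR k); lra).
  assert (Hd : 0 < Rmin (/ (INR k + 2)) (eps / (M + 1))).
  { apply Rmin_glb_lt; auto. apply Rdiv_lt_0_compat; lra. }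
  exists (mkposreal _ Hd). intros x Hx Hxa; simpl in Hxa.
  assert (M1 := Rmin_l (/ (INR k + 2)) (eps / (M + 1))).
  assert (M2 := Rmin_r (/ (INR k + 2)) (eps / (M + 1))).
  rewrite Rplus_0_l. unfold Ld. destruct (Rlt_dec 0 0); [lra|].
  destruct (Rlt_dec x 0) as [Hn|Hn].
  - rewrite Rabs_left in Hxa by lra.
    destruct (idx_spec x Hn) as [H1 H2].
    assert (Hi : (Z.of_nat k <= idx x)%Z).
    { destruct (Z.le_gt_cases (Z.of_nat k) (idx x)); auto.
      pose proof (A_mono (idx x + 1) (Z.of_nat (Datatypes.S k)) ltac:(lia)).
      rewrite (A_nonneg (Z.of_nat (Datatypes.S k))) in H0 by lia. rewrite <- INR_IZR_INZ, S_INR in H0.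
      replace (INR k + 1 + 1) with (INR k + 2) in H0 by ring. lra. }
    specialize (HE b (idx x) x Hi ltac:(lra)).
    replace ((PD b (idx x) k x - k0 k b) / x - 0) with ((PD b (idx x) k x - k0 k b) * / x) by (field; lra).
    rewrite Rabs_mult, Rabs_inv, (Rabs_left x) by lra.
    assert (0 < - x) by lra.
    apply (Rmult_lt_reg_r (- x)); auto. rewrite Rmult_assoc, Rinv_l by lra.
    apply Rle_lt_trans with (M * (x * x)). lra.
    replace (M * (x * x)) with (M * (- x) * (- x)) by ring.
    apply Rmult_lt_compat_r; auto.
    apply Rle_lt_trans with ((M + 1) * (- x)). nra.
    apply Rlt_le_trans with ((M + 1) * (eps / (M + 1))). apply Rmult_lt_compat_l; lra.
    right; field; lra.
  - replace ((k0 k b - k0 k b) / x - 0) with 0 by (field; auto). rewrite Rabs_R0. lra.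
Qed.

Lemma Ld_der b k y : derivable_pt_lim (Ld b k) y (Ld b (Datatypes.S k) y).
Proof.
  destruct (Rtotal_order y 0) as [H|[H|H]].
  apply Ld_der_neg; auto. subst; apply Ld_der_0. apply Ld_der_pos; auto.
Qed.


Definition Rd (k : nat) (y : R) : R := y * hd k y + INR k * hd (pred k) y.

Lemma Rd_der k y : derivable_pt_lim (Rd k) y (Rd (Datatypes.S k) y).
Proof.
  unfold Rd.
  assert (H1 := derivable_pt_lim_mult id (hd k) y 1 (hd (Datatypes.S k) y) (derivable_pt_lim_id y) (hd_der k y)).
  assert (H2 := derivable_pt_lim_mult (fun _ => INR k) (hd (pred k)) y 0 _ (derivable_pt_lim_const (INR k) y) (hd_der (pred k) y)).
  assert (H3 := derivable_pt_lim_plus _ _ _ _ _ H1 H2). unfold plus_fct, mult_fct, id in H3.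
  match goal with |- derivable_pt_lim _ _ ?l => replace l with
    (1 * hd k y + y * hd (Datatypes.S k) y + (0 * hd (pred k) y + INR k * hd (Datatypes.S (pred k)) y)) end.
  exact H3.
  destruct k. cbn [pred INR]. ring. cbn [pred]. rewrite (S_INR (Datatypes.S k)). ring.
Qed.

Definition vd (b : R) (k : nat) (y : R) : R := Ld b k y + Rd k y.
Definition v (b : R) : R -> R := vd b O.

Lemma vd_der b k y : derivable_pt_lim (vd b k) y (vd b (Datatypes.S k) y).
Proof. apply (derivable_pt_lim_plus (Ld b k) (Rd k)). apply Ld_der. apply Rd_der. Qed.

Lemma v_0 b : v b 0 = b.
Proof.
  unfold v, vd, Ld, Rd. destruct (Rlt_dec 0 0); [lra|]. simpl. ring.
Qed.

Lemma v_neg b y : y < 0 -> v b y = Ld b 0 y.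
Proof. intro. unfold v, vd, Rd, hd. destruct (Rle_dec y 0); [|lra]. simpl. ring. Qed.

Lemma v_nonneg b y : 0 <= y -> v b y = b + y * hd 0 y.
Proof. intro. unfold v, vd, Rd, Ld. destruct (Rlt_dec y 0); [lra|]. simpl. ring. Qed.

Lemma hd0_pos y : 0 < y -> hd 0 y = exp (- / y).
Proof. intro. unfold hd. destruct (Rle_dec y 0); [lra|]. simpl. ring. Qed.

Definition uu (i : Z) (y : R) : R := (y - A i) / (A (i + 1) - A i).

Lemma Ld0_eq b y : y < 0 -> Ld b 0 y =
   sAB (A (idx y)) (V b (idx y)) (A (idx y + 1)) (V b (idx y + 1)) y.
Proof.
  intro Hy. unfold Ld. destruct (Rlt_dec y 0); [|lra]. unfold PD, sAB. simpl. rewrite sd0.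
  field. all: pose proof (A_succ (idx y)); lra.
Qed.

Lemma Ld0_piece b i y : A i <= y < A (i + 1) ->
  V b i <= Ld b 0 y < V b (i + 1) /\ Ld b 0 y = V b i + (V b (i + 1) - V b i) * s (uu i y).
Proof.
  intro H. pose proof (A_neg (i+1)).
  assert (Ed : Ld b 0 y = V b i + (V b (i + 1) - V b i) * s (uu i y)).
  { unfold Ld. destruct (Rlt_dec y 0); [|lra]. rewrite (idx_unique i y H). unfold PD, uu. simpl.
    rewrite sd0. field. }
  pose proof (A_succ i). pose proof (V_succ b i).
  assert (Hu : 0 <= uu i y < 1).
  { unfold uu. split. apply Rmult_le_pos. lra. apply Rlt_le, Rinv_0_lt_compat; lra.
    apply (Rmult_lt_reg_r (A (i + 1) - A i)). lra. unfold Rdiv.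
    rewrite Rmult_assoc, Rinv_l by lra. lra. }
  assert (Hs : s (uu i y) < 1) by (rewrite <- (s_one 1) by lra; apply s_strict; lra).
  pose proof (s_range (uu i y)).
  split; auto. rewrite Ed. split; nra.
Qed.

Lemma Ld0_strict b x y : x < y -> y <= 0 -> Ld b 0 x < Ld b 0 y.
Proof.
  intros Hxy Hy. assert (Hx : x < 0) by lra.
  destruct (idx_spec x Hx) as [Hx1 Hx2]. set (i := idx x) in *.
  destruct (Ld0_piece b i x (conj Hx1 Hx2)) as [[B1 B2] Ex].
  destruct (Req_dec y 0) as [E|E].
  - subst. unfold Ld at 2. destruct (Rlt_dec 0 0); [lra|]. simpl. pose proof (V_lt_b b (i + 1)). lra.
  - assert (Hy' : y < 0) by lra. destruct (idx_spec y Hy') as [Hy1 Hy2]. set (j := idx y) in *.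
    destruct (Ld0_piece b j y (conj Hy1 Hy2)) as [[C1 C2] Ey].
    destruct (Z.lt_trichotomy i j) as [L|[L|L]].
    + pose proof (V_mono b (i + 1) j ltac:(lia)). lra.
    + rewrite Ex, Ey. rewrite <- L.
      assert (s (uu i x) < s (uu i y)).
      { pose proof (A_succ i). unfold uu. apply s_strict.
        apply Rmult_le_pos. lra. apply Rlt_le, Rinv_0_lt_compat; lra.
        apply Rmult_lt_compat_r. apply Rinv_0_lt_compat; lra. lra.
        apply (Rmult_le_reg_r (A (i + 1) - A i)). lra. unfold Rdiv.
        rewrite Rmult_assoc, Rinv_l by lra. rewrite <- L in Hy2. lra. }
      pose proof (V_succ b i). nra.
    + pose proof (A_mono (j + 1) i ltac:(lia)). lra.
Qed.

Lemma v_strict b x y : x < y -> v b x < v b y.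
Proof.
  intro H.
  destruct (Rle_dec y 0) as [Hy|Hy].
  - rewrite (v_neg b x) by lra. destruct (Req_dec y 0) as [E|E].
    + subst. rewrite v_0. pose proof (Ld0_strict b x 0 H ltac:(lra)).
      unfold Ld at 2 in H0. destruct (Rlt_dec 0 0); [lra|]. simpl in H0. lra.
    + rewrite v_neg by lra. apply Ld0_strict; lra.
  - rewrite (v_nonneg b y) by lra. rewrite hd0_pos by lra.
    assert (0 < y * exp (- / y)) by (apply Rmult_lt_0_compat; [lra| apply exp_pos]).
    destruct (Rle_dec x 0) as [Hx|Hx].
    + destruct (Req_dec x 0) as [E|E].
      * subst. rewrite v_0. lra.
      * rewrite v_neg by lra. pose proof (Ld0_strict b x 0 ltac:(lra) ltac:(lra)).
        unfold Ld at 2 in H1. destruct (Rlt_dec 0 0); [lra|]. simpl in H1. lra.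
    + rewrite (v_nonneg b x) by lra. rewrite hd0_pos by lra.
      assert (exp (- / x) < exp (- / y)).
      { apply exp_increasing. apply Ropp_lt_contravar. apply Rinv_lt_contravar; nra. }
      pose proof (exp_pos (- / x)). nra.
Qed.

Lemma v_cont b : continuity (v b).
Proof.
  intro x. apply derivable_continuous_pt. exists (vd b 1 x). apply vd_der.
Qed.

Lemma V_le0 b i : (i <= 0)%Z -> V b i = c b 0 + IZR i.
Proof.
  intro. unfold V. destruct (Z.leb_spec 0 i); auto. assert (i = 0%Z) by lia. subst. simpl. ring.
Qed.

Lemma v_low b y : y < -1 -> v b y < c b 0 + y + 2.
Proof.
  intro Hy. rewrite v_neg by lra. destruct (idx_spec y ltac:(lra)) as [H1 H2].
  set (i := idx y) in *.
  assert (Hi : (i <= -1)%Z).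
  { destruct (Z.le_gt_cases i (-1)); auto. pose proof (A_mono 0 i ltac:(lia)).
    rewrite A_nonneg in H0 by lia. simpl in H0. replace (- / (0 + 1)) with (-1) in H0 by field. lra. }
  destruct (Ld0_piece b i y (conj H1 H2)) as [[_ B] _].
  rewrite V_le0 in B by lia. rewrite A_le0 in H1 by lia. rewrite plus_IZR in B. simpl in B. lra.
Qed.

Lemma v_high b y : 1 <= y -> b + y - 1 <= v b y.
Proof.
  intro Hy. rewrite v_nonneg by lra. rewrite hd0_pos by lra.
  pose proof (exp_ineq1_le (- / y)).
  assert (y * (1 + - / y) = y - 1) by (field; lra). nra.
Qed.

Lemma v_T3 b : T3 (v b).
Proof.
  split; [|split; [|split]].
  - exists (vd b). split; auto. apply vd_der.
  - apply v_strict.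
  - intros x y E. destruct (Rtotal_order x y) as [L|[L|L]]; auto.
    pose proof (v_strict b x y L); lra. pose proof (v_strict b y x L); lra.
  - intro z. set (y1 := Rmin (-2) (z - c b 0 - 3)). set (y2 := Rmax 1 (z - b + 2)).
    assert (A1 := Rmin_l (-2) (z - c b 0 - 3)). assert (A2 := Rmin_r (-2) (z - c b 0 - 3)).
    assert (B1 := Rmax_l 1 (z - b + 2)). assert (B2 := Rmax_r 1 (z - b + 2)).
    pose proof (v_low b y1 ltac:(unfold y1; lra)). pose proof (v_high b y2 ltac:(unfold y2; lra)).
    destruct (IVT (fun x => v b x - z) y1 y2) as [x [_ Hx]].
    + apply continuity_minus. apply v_cont. apply continuity_const. intros ? ?; auto.
    + unfold y1, y2 in *; lra.
    + unfold y1 in *; lra.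
    + unfold y2 in *; lra.
    + exists x. lra.
Qed.

Lemma v_sim b y : y < 0 -> simF y (v b y).
Proof.
  intro Hy. left. rewrite v_neg, Ld0_eq by auto.
  destruct (idx_spec y Hy) as [H1 H2]. set (i := idx y) in *.
  destruct (A_rat i) as [p1 E1]. destruct (A_rat (i + 1)) as [p2 E2].
  destruct (V_rat b i) as [q1 F1]. destruct (V_rat b (i + 1)) as [q2 F2].
  exists p1, q1, p2, q2. rewrite <- E1, <- E2, <- F1, <- F2.
  pose proof (A_succ i). pose proof (V_succ b i).
  repeat split; auto; lra.
Qed.

Lemma fcls_eq x y : simF x y -> fcls x = fcls y.
Proof.
  intro H.
  assert (Hs : simF y x) by (destruct H; [right|left]; auto).
  assert (E : simF_star x = simF_star y).
  { apply functional_extensionality; intro a. apply propositional_extensionality. split; intro Ha.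
    - apply rt_trans with x; auto. apply rt_step; auto.
    - apply rt_trans with y; auto. apply rt_step; auto. }
  unfold fcls. generalize (ex_intro (fun x0 : R => simF_star x = simF_star x0) x eq_refl).
  generalize (ex_intro (fun x0 : R => simF_star y = simF_star x0) y eq_refl).
  rewrite E. intros e1 e2. f_equal. apply proof_irrelevance.
Qed.

Theorem mainTheorem9 :
  forall P : (R -> S) -> (R -> S),
    is_predictor P -> T3_anonymous P ->
    forall w z : R, P fcls w = P fcls z.
Proof.
  intros P Hp Ha.
  assert (K : forall b, P fcls b = P fcls 0).
  { intro b. specialize (Ha fcls (v b) (v_T3 b)).
    pose proof (f_equal (fun F => F 0) Ha) as E. simpl in E. rewrite v_0 in E.
    rewrite <- E. apply Hp. intros y Hy. symmetry. apply fcls_eq. apply v_sim; auto. }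
  intros w z. rewrite (K w), (K z). auto.
Qed.
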